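(* Let $\mathcal{A}\subseteq\mathbb{R}^a$ be a closed convex set with recession cone $\mathcal{A}_\infty$. Consider the following properties. (S1) There is $a^0\in\mathbb{R}^a$ with $\mathcal{A}\subseteq\{a^0\}+\mathcal{A}_\infty$. (S2) There are $k\in\mathbb{N}$ and $a^1,\dots,a^k\in\mathbb{R}^a$ with $\mathcal{A}\subseteq\operatorname{conv}\{a^1,\dots,a^k\}+\mathcal{A}_\infty$. (S3) $\sup_{x\in\mathcal{A}}\inf_{y\in\mathcal{A}_\infty}\|x-y\|_1<\infty$. Then (S1) implies (S2), and (S2) is equivalent to (S3). If in addition $\mathcal{A}_\infty$ has nonempty interior, then (S1), (S2) and (S3) are all equivalent.
   Context: The recession cone of a set $X\subseteq\mathbb{R}^n$ is $X_\infty=\{d\in\mathbb{R}^n: x+\lambda d\in X \text{ for all } x\in X,\ \lambda\ge 0\}$. $\|\cdot\|_1$ denotes the $\ell_1$ norm. *)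

(* Defs.v *)
From HB Require Import structures.
From mathcomp Require Import all_boot all_order all_algebra.
From mathcomp Require Import all_classical all_reals all_analysis.
Set Implicit Arguments. Unset Strict Implicit. Unset Printing Implicit Defensive.
Import Order.TTheory GRing.Theory Num.Theory.
Import numFieldTopology.Exports numFieldNormedType.Exports.
Local Open Scope classical_set_scope.
Local Open Scope ring_scope.

Section Defs.
Variables (R : realType) (n : nat).
Notation V := 'rV[R]_n.

Definition l1norm (x : V) : R := \sum_(i < n) `|x ord0 i|.

Definition recession_cone (X : set V) : set V :=
  [set d | forall x (l : R), X x -> 0 <= l -> X (x + l *: d)].

Definition mink_sum (B C : set V) : set V :=
  [set z | exists b, B b /\ exists c, C c /\ z = b + c].

Definition conv_hull (k : nat) (a : 'I_k -> V) : set V :=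
  [set z | exists lam : 'I_k -> R,
     (forall i, 0 <= lam i) /\ \sum_(i < k) lam i = 1 /\
     z = \sum_(i < k) lam i *: a i].
End Defs.

(* Main.v *)
Require Import Defs.
From HB Require Import structures.
From mathcomp Require Import all_boot all_order all_algebra.
From mathcomp Require Import all_classical all_reals all_analysis.
From mathcomp Require Import ring lra.
Import Order.TTheory GRing.Theory Num.Theory.
Import numFieldTopology.Exports numFieldNormedType.Exports.
Local Open Scope classical_set_scope.
Local Open Scope ring_scope.

Section Helpers.
Variables (R : realType) (n : nat).
Notation V := 'rV[R]_n.

Lemma rc0 (A : set V) : recession_cone A 0.
Proof. by move=> x l Ax _; rewrite scaler0 addr0. Qed.

Lemma rcD (A : set V) d1 d2 : recession_cone A d1 -> recession_cone A d2 ->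
  recession_cone A (d1 + d2).
Proof. by move=> h1 h2 x l Ax l0; rewrite scalerDr addrA; apply: h2 => //; apply: h1. Qed.

Lemma rcZ (A : set V) (c : R) d : 0 <= c -> recession_cone A d ->
  recession_cone A (c *: d).
Proof. by move=> c0 h x l Ax l0; rewrite scalerA; apply: h => //; rewrite mulr_ge0. Qed.

Lemma l1normD (u v : V) : l1norm (u + v) <= l1norm u + l1norm v.
Proof.
rewrite /l1norm -big_split /=; apply: ler_sum => i _; rewrite mxE; exact: ler_normD.
Qed.

Lemma l1normZ (l : R) (u : V) : l1norm (l *: u) = `|l| * l1norm u.
Proof. by rewrite /l1norm mulr_sumr; apply: eq_bigr => i _; rewrite mxE normrM. Qed.

Lemma l1norm_ge0 (u : V) : 0 <= l1norm u.
Proof. by apply: sumr_ge0 => i _. Qed.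

Lemma conv_bound (N : V -> R) k (a : 'I_k -> V) c :
  N 0 <= 0 -> (forall u v, N (u + v) <= N u + N v) ->
  (forall l u, N (l *: u) = `|l| * N u) -> (forall u, 0 <= N u) ->
  conv_hull a c -> N c <= \sum_(i < k) N (a i).
Proof.
move=> N0 ND NZ Nge [lam [lam0 [lam1 ->]]].
have lamle1 i : lam i <= 1.
  by rewrite -lam1 (bigD1 i) //= lerDl sumr_ge0.
apply: (big_ind2 (fun u r => N u <= r)) => //.
  by move=> x1 x2 y1 y2 h1 h2; apply: le_trans (ND _ _) _; apply: lerD.
move=> i _; rewrite NZ ger0_norm // -[leRHS]mul1r; exact: ler_wpM2r.
Qed.

End Helpers.
Definition pick3 (T : Type) (n : nat) (t0 : T) (f g : 'I_n -> T) (i : 'I_(n + n).+1) : T :=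
  match unlift ord0 i with
  | None => t0
  | Some j => match fintype.split j with inl j => f j | inr j => g j end
  end.

Arguments pick3 {T n}.
Lemma pick3_0 T n t0 f g : @pick3 T n t0 f g ord0 = t0.
Proof. by rewrite /pick3 unlift_none. Qed.
Lemma pick3_l T n t0 f g j : @pick3 T n t0 f g (lift ord0 (lshift n j)) = f j.
Proof.
rewrite /pick3 liftK. have := unsplitK (inl j : 'I_n + 'I_n). by move=> /= ->.
Qed.
Lemma pick3_r T n t0 f g j : @pick3 T n t0 f g (lift ord0 (rshift n j)) = g j.
Proof.
rewrite /pick3 liftK. have := unsplitK (inr j : 'I_n + 'I_n). by move=> /= ->.
Qed.
Lemma sum3 (Z : nmodType) n (h : 'I_(n + n).+1 -> Z) :
  \sum_i h i = h ord0 + (\sum_(j < n) h (lift ord0 (lshift n j)) +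
                         \sum_(j < n) h (lift ord0 (rshift n j))).
Proof. by rewrite big_ord_recl big_split_ord. Qed.

Lemma ball_decomp (R : realType) (n : nat) (r : R) (z : 'rV[R]_n) :
  0 < r -> l1norm z < r ->
  conv_hull (pick3 0 (fun j => r *: 'e_j) (fun j => - r *: 'e_j)) z.
Proof.
move=> r0 zr.
pose p j := (`|z 0 j| + z 0 j) / (2 * r).
pose m j := (`|z 0 j| - z 0 j) / (2 * r).
exists (pick3 (1 - l1norm z / r) p m); split; [|split].
- move=> i; rewrite /pick3; case: unlift => [j|].
    case: fintype.split => k; rewrite /p /m; apply: divr_ge0; try lra;
      have h3 := ler_norm (z 0 k); have h4 := ler_norm (- z 0 k); rewrite normrN in h4; lra.
  by rewrite subr_ge0 ler_pdivrMr // mul1r ltW.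
- rewrite sum3 pick3_0 -big_split /=.
  under eq_bigr => j _ do rewrite pick3_l pick3_r.
  rewrite (_ : \sum_(j < n) (p j + m j) = l1norm z / r); first by rewrite subrK.
  rewrite /l1norm mulr_suml; apply: eq_bigr => j _; rewrite /p /m; field.
  by rewrite lt0r_neq0.
- rewrite sum3 !pick3_0 scaler0 add0r -big_split /=.

  under eq_bigr => j _ do rewrite !pick3_l !pick3_r !scalerA -scalerDl.
  rewrite {1}(row_sum_delta z); apply: eq_bigr => j _; congr (_ *: _).
  rewrite /p /m; field; by rewrite lt0r_neq0.
Qed.

Theorem mainTheorem2 (R : realType) (n : nat) (A : set 'rV[R]_n) :
  closed A -> convex_set A ->
  let Ainf := recession_cone A in
  let S1 := exists a0 : 'rV[R]_n, A `<=` mink_sum [set x | x = a0] Ainf in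
  let S2 := exists (k : nat) (a : 'I_k -> 'rV[R]_n), A `<=` mink_sum (conv_hull a) Ainf in
  let S3 := (ereal_sup [set ereal_inf [set (l1norm (x - y))%:E | y in Ainf]
                       | x in A] < +oo)%E in
  (S1 -> S2) /\ (S2 <-> S3) /\
  (interior Ainf !=set0 -> (S1 <-> S2) /\ (S2 <-> S3)).
Proof.
move=> _ _ Ainf S1 S2 S3.
have l10 : l1norm (0 : 'rV[R]_n) <= 0.
  by rewrite /l1norm big1 // => i _; rewrite mxE normr0.
have S12 : S1 -> S2.
  case=> a0 h; exists 1, (fun _ => a0) => x /h [b [-> [c [hc ->]]]].
  exists a0; split; last by exists c.
  exists (fun _ => 1); split => //; split; first by rewrite big_ord1.
  by rewrite big_ord1 scale1r.
have S23 : S2 -> S3.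
  case=> k [a h]; rewrite /S3.
  apply: (@le_lt_trans _ _ (\sum_i l1norm (a i))%:E); last exact: ltry.
  apply: ge_ereal_sup => _ [x Ax <-].
  have [c [hc [d [hd ->]]]] := h x Ax.
  apply: ge_ereal_inf; exists (l1norm (c + d - d))%:E; first by exists d.
  rewrite addrK lee_fin; apply: conv_bound hc => //.
  - exact: l1normD.
  - exact: l1normZ.
  - exact: l1norm_ge0.
have S32 : S3 -> S2.
  move=> hS.
  have [r r0 hr] : exists2 r : R, 0 < r & (ereal_sup [set ereal_inf [set (l1norm (x - y))%:E | y in Ainf]
                       | x in A] < r%:E)%E.
    move: hS; rewrite /S3; case: ereal_sup => [s| |] // _.
      exists (`|s| + 1); first by have := normr_ge0 s; lra.
      by rewrite lte_fin; have := ler_norm s; lra.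
    by exists 1 => //; exact: ltNyr.
  exists (n + n).+1, (pick3 0 (fun j => r *: 'e_j) (fun j => - r *: 'e_j)) => x Ax.
  have : (ereal_inf [set (l1norm (x - y))%:E | y in Ainf] < r%:E)%E.
    by apply: le_lt_trans hr; apply: ereal_sup_ge; exists (ereal_inf [set (l1norm (x - y))%:E | y in Ainf]) => //; exists x.
  case/ereal_inf_lt => _ [y Ay <-]; rewrite lte_fin => hy.
  exists (x - y); split; first exact: ball_decomp.
  by exists y; split => //; rewrite subrK.
split => //; split; first by split.
move=> [d hd]; split; last by split.
split; first exact: S12.
move=> [k [a h]].
move/nbhs_ballP: hd => [e e0 be].
pose K := \sum_i `|a i|.
have K0 : 0 <= K by apply: sumr_ge0 => i _.
pose t := K / e + 1.
have t0 : 0 < t by rewrite /t; have := divr_ge0 K0 (ltW e0); lra.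
exists (- t *: d) => x /h [c [hc [d' [hd' ->]]]].
exists (- t *: d); split => //.
exists (c + t *: d + d'); split; last first.
  by rewrite scaleNr addrA [c + t *: d]addrC addKr.
apply: rcD => //.
have -> : c + t *: d = t *: (d + t^-1 *: c).
  by rewrite scalerDr scalerA mulfV ?gt_eqF // scale1r addrC.
apply: rcZ; first exact: ltW.
apply: be; rewrite -ball_normE /ball_ /= opprD addrA subrr add0r normrN normrZ.
have cK : `|c| <= K.
  apply: conv_bound hc.
  - by rewrite normr0.
  - exact: ler_normD.
  - exact: normrZ.
  - exact: normr_ge0.
rewrite gtr0_norm ?invr_gt0 //.
rewrite ltr_pdivrMl //.
rewrite /t mulrDl divfK ?gt_eqF // mul1r.
have e0' : 0 < e := e0.
by have := cK; lra.
Qed.
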